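(* Let $\Sigma$ be a finite alphabet and $\emptyset \subsetneq L \subsetneq \Sigma^*$. Then for all $n\ge 0$, $V_L(n) = \log |\psi_L(\Sigma^{\le n})|$.
   Context: $\log x$ denotes $\lfloor\log_2 x\rfloor$; $\Sigma^{\le n}$ is the set of words of length at most $n$. The Myhill–Nerode congruence: $x\sim_L y$ iff for all $z$, $xz\in L\iff yz\in L$. Define $\psi_L(a_1\cdots a_n)=[a_1\cdots a_n]_{\sim_L}[a_2\cdots a_n]_{\sim_L}\cdots[a_n]_{\sim_L}$, a word over the set of $\sim_L$-classes (with $\psi_L(\varepsilon)=\varepsilon$). Variable-size sliding window model: a streaming algorithm over an alphabet is a deterministic (possibly infinite-state) automaton with an injective encoding $\mathrm{enc}$ of states into bit strings, and $\mathrm{space}(\mathcal{A},w)=\max\{|\mathrm{enc}(\mathcal{A}(u))|:u\text{ prefix of }w\}$. Let $\overline\Sigma=\Sigma\cup\{\downarrow\}$ and $\mathrm{wnd}(\varepsilon)=\varepsilon$, $\mathrm{wnd}(ub)=\mathrm{wnd}(u)b$ for $b\in\Sigma$, $\mathrm{wnd}(u\!\downarrow)=\varepsilon$ if $\mathrm{wnd}(u)=\varepsilon$, $\mathrm{wnd}(u\!\downarrow)=v$ if $\mathrm{wnd}(u)=bv$. A variable-size sliding window algorithm for $L$ is a streaming algorithm over $\overline\Sigma$ accepting $\{w:\mathrm{wnd}(w)\in L\}$ with space complexity $v_\mathcal{A}(n)=\max\{\mathrm{space}(\mathcal{A},u):|\mathrm{wnd}(v)|\le n\text{ for all prefixes }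 v \text{ of } u\}$. $V_L(n)$ is the minimum of $v_\mathcal{A}(n)$ over all variable-size sliding window algorithms for $L$. *)

(* Defs.v *)
From mathcomp Require Import all_boot.
Set Implicit Arguments. Unset Strict Implicit. Unset Printing Implicit Defensive.

Section Defs.
Variable Sigma : finType.

Definition language := seq Sigma -> Prop.

Definition nerode (L : language) (x y : seq Sigma) : Prop :=
  forall z, L (x ++ z) <-> L (y ++ z).

Definition nclass (L : language) (x : seq Sigma) : seq Sigma -> Prop :=
  fun y => nerode L x y.

Definition psi (L : language) (w : seq Sigma) : seq (seq Sigma -> Prop) :=
  [seq nclass L (drop i w) | i <- iota 0 (size w)].

Definition psi_image (L : language) (n : nat) : seq (seq Sigma -> Prop) -> Prop :=
  fun p => exists w : seq Sigma, size w <= n /\ psi L w = p.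

(* Extended alphabet: Some b = letter b, None = the expiration symbol "down". *)
Definition sym := option Sigma.

Definition wnd_step (v : seq Sigma) (a : sym) : seq Sigma :=
  match a with Some b => rcons v b | None => behead v end.
Definition wnd (w : seq sym) : seq Sigma := foldl wnd_step [::] w.

Record stream_alg := StreamAlg {
  st : Type;
  st_init : st;
  st_delta : st -> sym -> st;
  st_final : st -> Prop;
  st_enc : st -> seq bool;
  st_enc_inj : injective st_enc
}.

Definition run (A : stream_alg) (u : seq sym) : st A :=
  foldl (@st_delta A) (st_init A) u.

Definition space (A : stream_alg) (w : seq sym) : nat :=
  \max_(i < (size w).+1) size (st_enc (run A (take i w))).

Definition sw_alg_for (L : language) (A : stream_alg) : Prop :=
  forall w : seq sym, st_final (run A w) <-> L (wnd w).

(* v_A(n) <= m  (v_A(n) is a max over an infinite set, possibly infinite). *)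
Definition v_le (A : stream_alg) (n m : nat) : Prop :=
  forall u : seq sym,
    (forall i, i <= size u -> size (wnd (take i u)) <= n) -> space A u <= m.

Definition V_eq (L : language) (n m : nat) : Prop :=
  (exists A, sw_alg_for L A /\ v_le A n m) /\
  (forall A m', sw_alg_for L A -> v_le A n m' -> m <= m').

End Defs.

Definition has_card (T : Type) (S : T -> Prop) (N : nat) : Prop :=
  exists f : 'I_N -> T, injective f /\ (forall x, S x <-> exists i, f i = x).

Definition log2 (x : nat) : nat := trunc_log 2 x.

(* Main.v *)
Require Import Defs.
From mathcomp Require Import all_boot.
From mathcomp Require Import zify.
From Stdlib Require Import ClassicalEpsilon FunctionalExtensionality PropExtensionality ProofIrrelevance Classical.
Set Implicit Arguments. Unset Strict Implicit. Unset Printing Implicit Defensive.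

Lemma nerode_refl (S : finType) (L : language S) x : nerode L x x.
Proof. by move=> z. Qed.

Lemma nerode_sym (S : finType) (L : language S) x y : nerode L x y -> nerode L y x.
Proof. by move=> H z; apply: iff_sym. Qed.

Lemma nerode_rcons (S : finType) (L : language S) x y a :
  nerode L x y -> nerode L (rcons x a) (rcons y a).
Proof. by move=> H z; rewrite -!cats1 -!catA; exact: H. Qed.

Lemma nclass_eq (S : finType) (L : language S) x y :
  nerode L x y -> nclass L x = nclass L y.
Proof.
move=> H; apply: functional_extensionality => v; apply: propositional_extensionality.
rewrite /nclass; split=> H' z.
- exact: iff_trans (iff_sym (H z)) (H' z).
- exact: iff_trans (H z) (H' z).
Qed.

Lemma psi_eqP (S : finType) (L : language S) (x y : seq S) :
  psi L x = psi L y <-> size x = size y /\ forall i, nerode L (drop i x) (drop i y).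
Proof.
split.
- move=> E.
  have Hs : size x = size y by move: (congr1 size E); rewrite /psi !size_map !size_iota.
  split=> // i.
  case: (ltnP i (size x)) => Hi.
  + have := congr1 (fun s => nth (nclass L [::]) s i) E.
    rewrite /psi (nth_map 0) ?size_iota // (nth_map 0) ?size_iota -?Hs //.
    rewrite !nth_iota -?Hs // add0n => Ec.
    have : nclass L (drop i x) (drop i x) by exact: nerode_refl.
    rewrite Ec /nclass => H. exact: nerode_sym.
  + have Hi' : size y <= i by rewrite -Hs.
    rewrite (drop_oversize Hi) (drop_oversize Hi'); exact: nerode_refl.
- case=> Hs H; rewrite /psi Hs; apply: eq_map => i; exact: nclass_eq.
Qed.

Lemma foldl_wnd_some (S : finType) (v y : seq S) :
  foldl (@wnd_step S) v (map Some y) = v ++ y.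
Proof. elim: y v => [|a y IH] v /=; first by rewrite cats0. by rewrite IH cat_rcons. Qed.

Lemma foldl_wnd_none (S : finType) (v : seq S) j :
  foldl (@wnd_step S) v (nseq j None) = drop j v.
Proof. elim: j v => [|j IH] [|a v] //=; rewrite ?drop0 // IH //. Qed.

Lemma run_cat (S : finType) (A : stream_alg S) u v :
  run A (u ++ v) = foldl (@st_delta S A) (run A u) v.
Proof. by rewrite /run foldl_cat. Qed.

Lemma key (S : finType) (L : language S) (A : stream_alg S) w w' :
  sw_alg_for L A -> run A (map Some w) = run A (map Some w') ->
  forall y j, L (drop j (w ++ y)) <-> L (drop j (w' ++ y)).
Proof.
move=> HA E y j.
have Hw : forall w0, wnd (map Some w0 ++ (map Some y ++ nseq j None)) = drop j (w0 ++ y).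
  move=> w0; rewrite /wnd foldl_cat foldl_cat foldl_wnd_some foldl_wnd_some.
  by rewrite foldl_wnd_none.
rewrite -Hw -Hw.
have F : st_final (run A (map Some w ++ (map Some y ++ nseq j None))) <->
         st_final (run A (map Some w' ++ (map Some y ++ nseq j None))).
  by rewrite !run_cat E.
split=> H; apply/HA; [apply/F | apply/F]; apply/HA; exact: H.
Qed.

Lemma neq_size_contra (S : finType) (L : language S) (hne : exists w, L w)
  (hproper : exists w, ~ L w) (w w' : seq S) :
  (forall y j, L (drop j (w ++ y)) <-> L (drop j (w' ++ y))) -> size w < size w' -> False.
Proof.
move=> K Hlt.
have Hd : 0 < size w' - size w by rewrite subn_gt0.
have H1 : forall y, L y <-> L (drop (size w' - size w) y).
  move=> y; have := K y (size w').
  rewrite (@drop_size_cat _ (size w') w') // drop_cat ltnNge (ltnW Hlt) /= => H.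
  exact: iff_sym H.
have Hk : forall k y, L y <-> L (drop (k * (size w' - size w)) y).
  elim=> [|k IH] y; first by rewrite mul0n drop0.
  rewrite mulSn -drop_drop; exact: iff_trans (IH y) (H1 _).
have H0 : forall y, L y <-> L [::].
  move=> y; have := Hk (size y) y.
  by rewrite drop_oversize ?(leq_pmulr _ Hd).
case: hne => x Lx; case: hproper => z nz; apply: nz.
exact: (proj2 (H0 z)) ((proj1 (H0 x)) Lx).
Qed.

Lemma key_psi (S : finType) (L : language S) (hne : exists w, L w)
  (hproper : exists w, ~ L w) (w w' : seq S) :
  (forall y j, L (drop j (w ++ y)) <-> L (drop j (w' ++ y))) -> psi L w = psi L w'.
Proof.
move=> K.
case: (ltngtP (size w) (size w')) => Hs.
- exfalso; exact: (@neq_size_contra S L hne hproper w w' K Hs).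
- exfalso; apply: (@neq_size_contra S L hne hproper w' w _ Hs) => y j.
  exact: iff_sym (K y j).
- apply/psi_eqP; split=> // i z.
  case: (ltnP i (size w)) => Hi.
  + by have := K z i; rewrite !drop_cat -Hs Hi.
  + have Hi' : size w' <= i by rewrite -Hs.
    rewrite (drop_oversize Hi) (drop_oversize Hi'); exact: iff_refl.
Qed.


Definition code (s : seq bool) : nat := foldl (fun acc (b : bool) => acc.*2 + b) 1 s.

Lemma code_rcons s b : code (rcons s b) = (code s).*2 + b.
Proof. by rewrite /code foldl_rcons. Qed.

Lemma code_bounds s : 2 ^ size s <= code s < 2 ^ (size s).+1.
Proof.
elim/last_ind: s => [|s b IH] //.
case/andP: IH => H1 H2; rewrite expnS in H2.
rewrite code_rcons size_rcons !expnS -!addnn; case: b => /=; lia.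
Qed.

Lemma code_size s t : code s = code t -> size s = size t.
Proof.
move=> E.
have := trunc_log_eq (isT : 1 < 2) (code_bounds s).
have := trunc_log_eq (isT : 1 < 2) (code_bounds t).
by rewrite E => -> .
Qed.

Lemma code_inj : injective code.
Proof.
elim/last_ind => [|s b IH] t E; have Hs := code_size E.
- by case: t Hs E.
- case/lastP: t Hs E => [|t c]; first by rewrite size_rcons.
  rewrite !code_rcons => _ E.
  have Hbc : b = c.
    by have := congr1 odd E; rewrite !oddD !odd_double /= !oddb.
  subst c; suff -> : s = t by [].
  apply: IH; rewrite -!addnn in E; lia.
Qed.

Lemma count_lb N (g : 'I_N -> seq bool) m :
  injective g -> (forall i, size (g i) <= m) -> N < 2 ^ m.+1.
Proof.
move=> gi gs.
have Hpos : 0 < 2 ^ m.+1 by rewrite expn_gt0.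
have Hlt : forall i, (code (g i)).-1 < (2 ^ m.+1).-1.
  move=> i; case/andP: (code_bounds (g i)) => H1 H2.
  have H3 : 2 ^ (size (g i)).+1 <= 2 ^ m.+1 by rewrite leq_exp2l // ltnS gs.
  have H4 : 0 < code (g i) := leq_trans (expn_gt0 2 _) H1.
  lia.
pose h := fun i => Ordinal (Hlt i).
have hi : injective h.
  move=> i j /(congr1 val) /= E; apply: gi; apply: code_inj.
  have := code_bounds (g i); have := code_bounds (g j).
  move=> /andP[Hj _] /andP[Hi _].
  have := leq_trans (expn_gt0 2 _) Hi; have := leq_trans (expn_gt0 2 _) Hj.
  lia.
have := @leq_card _ _ h hi; rewrite !card_ord; lia.
Qed.

Lemma log_le N m : N < 2 ^ m.+1 -> log2 N <= m.
Proof.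
move=> H; rewrite /log2; case: N H => [|N] H; first by rewrite trunc_log0.
have H2 := trunc_logP (isT : 1 < 2) (isT : 0 < N.+1).
by have := leq_ltn_trans H2 H; rewrite ltn_exp2l.
Qed.

Lemma code_surj k : exists s, code s = k.+1.
Proof.
elim/ltn_ind: k => k IH.
case: k IH => [|k] IH; first by exists [::].
have Hk : k./2 < k.+1.
  rewrite ltnS -{2}(odd_double_half k) -addnn addnA; exact: leq_addl.
have [s Hs] := IH _ Hk.
exists (rcons s (odd k)); rewrite code_rcons Hs doubleS addSn addSn.
by rewrite addnC odd_double_half.
Qed.

Lemma code_surjb k : exists s, code s == k.+1.
Proof. by have [s Hs] := code_surj k; exists s; rewrite Hs. Qed.

Definition bin (k : nat) : seq bool := xchoose (code_surjb k).

Lemma bin_code k : code (bin k) = k.+1.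
Proof. exact/eqP/(xchooseP (code_surjb k)). Qed.

Lemma bin_inj : injective bin.
Proof. by move=> i j E; have := bin_code i; rewrite E bin_code => -[]. Qed.

Lemma bin_size k : size (bin k) = log2 k.+1.
Proof. by rewrite /log2 -(bin_code k) (trunc_log_eq (isT : 1 < 2) (code_bounds _)). Qed.

Lemma has_card_list (A : eqType) (T : Type) (x0 : T) (g : A -> T) (l : seq A) :
  exists N, has_card (fun x => exists a, a \in l /\ g a = x) N.
Proof.
elim: l => [|a l [N [f [fi Hf]]]].
  exists 0, (fun _ => x0); split; first by case.
  by move=> x; split; [case=> ? [] | case=> -[]].
case: (classic (exists i, f i = g a)) => [[i0 Hi0]|Hno].
- exists N, f; split=> // x; split.
  + case=> b []; rewrite in_cons => /orP[/eqP -> <-|Hb Hx]; first by exists i0.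
    by apply/Hf; exists b.
  + move/Hf => [b [Hb Hx]]; exists b; by rewrite in_cons Hb orbT.
- pose f' := fun i : 'I_N.+1 => match unlift ord_max i with Some j => f j | None => g a end.
  exists N.+1, f'; split.
  + move=> i j; rewrite /f'.
    case: (unliftP ord_max i) => [i' ->|->]; case: (unliftP ord_max j) => [j' ->|->] //.
    * by move/fi => ->.
    * by move=> E; case: Hno; exists i'.
    * by move=> E; case: Hno; exists j'.
  + move=> x; split.
    * case=> b []; rewrite in_cons => /orP[/eqP -> <-|Hb Hx].
        by exists ord_max; rewrite /f' unlift_none.
      have [j Hj] : exists j, f j = x by apply/Hf; exists b.
      by exists (lift ord_max j); rewrite /f' liftK.
    * case=> i; rewrite /f'; case: (unliftP ord_max i) => [j _ Hj|_ <-].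
        have [b [Hb Hx]] := proj2 (Hf x) (ex_intro _ j Hj).
        by exists b; rewrite in_cons Hb orbT.
      by exists a; rewrite in_cons eqxx.
Qed.

Fixpoint words (S : finType) (k : nat) : seq (seq S) :=
  if k is k'.+1 then [::] :: [seq a :: w | a <- enum S, w <- words S k'] else [:: [::]].

Lemma wordsP (S : finType) k (w : seq S) : (w \in words S k) = (size w <= k).
Proof.
elim: k w => [|k IH] [|a w] //=.
rewrite in_cons /=; apply/allpairsP/idP.
- by case=> [[b v]] /= [_ Hv [Ea Ew]]; subst; rewrite /= ltnS -IH.
- by move=> H; exists (a, w); rewrite mem_enum IH.
Qed.


Definition Sst (S : finType) (L : language S) :=
  {p : seq (seq S -> Prop) | exists w, psi L w = p}.

Definition rep (S : finType) (L : language S) (s : Sst L) : seq S :=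
  proj1_sig (constructive_indefinite_description _ (proj2_sig s)).

Lemma rep_spec (S : finType) (L : language S) (s : Sst L) : psi L (rep s) = proj1_sig s.
Proof. exact: (proj2_sig (constructive_indefinite_description _ (proj2_sig s))). Qed.

Definition mk (S : finType) (L : language S) (w : seq S) : Sst L :=
  exist _ (psi L w) (ex_intro _ w erefl).

Definition sdelta (S : finType) (L : language S) (s : Sst L) (a : sym S) : Sst L :=
  mk L (wnd_step (rep s) a).

Definition sfinal (S : finType) (L : language S) (s : Sst L) : Prop := L (rep s).

Lemma Sst_eq (S : finType) (L : language S) (s s' : Sst L) :
  proj1_sig s = proj1_sig s' -> s = s'.
Proof.
case: s s' => p hp [p' hp'] /= E; subst p'.
by rewrite (proof_irrelevance _ hp hp').
Qed.

Definition snum (S : finType) (L : language S) n N (f : 'I_N -> seq (seq S -> Prop))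
  (hf : forall x, psi_image L n x <-> exists i, f i = x) (s : Sst L) : nat :=
  match excluded_middle_informative (psi_image L n (proj1_sig s)) with
  | left H => nat_of_ord (proj1_sig (constructive_indefinite_description _ (proj1 (hf _) H)))
  | right _ => N + pickle (rep s)
  end.

Lemma snum_inj (S : finType) (L : language S) n N (f : 'I_N -> seq (seq S -> Prop))
  (hf : forall x, psi_image L n x <-> exists i, f i = x) : injective (snum hf).
Proof.
move=> s s'; rewrite /snum.
case: excluded_middle_informative => H; case: excluded_middle_informative => H'.
- case: (constructive_indefinite_description _ _) => i Hi.
  case: (constructive_indefinite_description _ _) => j Hj /= E.
  apply: Sst_eq; rewrite -Hi -Hj; congr f; exact: val_inj.
- case: (constructive_indefinite_description _ _) => i Hi /= E.
  by have := ltn_ord i; rewrite E ltnNge leq_addr.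
- case: (constructive_indefinite_description _ _) => j Hj /= E.
  by have := ltn_ord j; rewrite -E ltnNge leq_addr.
- move/addnI/(pcan_inj (@pickleK _)) => E.
  by apply: Sst_eq; rewrite -!rep_spec E.
Qed.

Definition senc (S : finType) (L : language S) n N (f : 'I_N -> seq (seq S -> Prop))
  (hf : forall x, psi_image L n x <-> exists i, f i = x) (s : Sst L) : seq bool :=
  bin (snum hf s).

Lemma senc_inj (S : finType) (L : language S) n N (f : 'I_N -> seq (seq S -> Prop))
  (hf : forall x, psi_image L n x <-> exists i, f i = x) : injective (senc hf).
Proof. by move=> s s' /bin_inj /snum_inj. Qed.

Definition salg (S : finType) (L : language S) n N (f : 'I_N -> seq (seq S -> Prop))
  (hf : forall x, psi_image L n x <-> exists i, f i = x) : stream_alg S :=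
  @StreamAlg S (Sst L) (mk L [::]) (@sdelta S L) (@sfinal S L) (senc hf) (@senc_inj S L n N f hf).

Lemma psi_step (S : finType) (L : language S) x y a :
  psi L x = psi L y -> psi L (wnd_step x a) = psi L (wnd_step y a).
Proof.
move/psi_eqP=> [Hs H]; apply/psi_eqP; case: a => [b|] /=.
- rewrite !size_rcons Hs; split=> // i.
  case: (leqP i (size x)) => Hi.
  + have Hi' : i <= size y by rewrite -Hs.
    rewrite (drop_rcons Hi) (drop_rcons Hi'); exact: nerode_rcons.
  + have Hi1 : size (rcons x b) <= i by rewrite size_rcons.
    have Hi2 : size (rcons y b) <= i by rewrite size_rcons -Hs.
    rewrite (drop_oversize Hi1) (drop_oversize Hi2); exact: nerode_refl.
- rewrite -!drop1 !size_drop Hs; split=> // i.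
  by rewrite !drop_drop.
Qed.

Lemma psi_L (S : finType) (L : language S) x y : psi L x = psi L y -> L x <-> L y.
Proof.
move/psi_eqP=> [_ H]; have := H 0 [::]; by rewrite !drop0 !cats0.
Qed.

Lemma srun (S : finType) (L : language S) u (s : Sst L) v :
  proj1_sig s = psi L v ->
  proj1_sig (foldl (@sdelta S L) s u) = psi L (foldl (@wnd_step S) v u).
Proof.
elim: u s v => [|a u IH] s v //= E; apply: IH.
by rewrite /sdelta /mk /=; apply: psi_step; rewrite rep_spec.
Qed.

Lemma upper (S : finType) (L : language S) n N (f : 'I_N -> seq (seq S -> Prop))
  (hf : forall x, psi_image L n x <-> exists i, f i = x) :
  sw_alg_for L (salg hf) /\ v_le (salg hf) n (log2 N).
Proof.
have Hrun : forall u, proj1_sig (run (salg hf) u) = psi L (wnd u).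
  by move=> u; rewrite /run /wnd /=; apply: srun.
split.
- move=> w; rewrite /= /sfinal; apply: psi_L; by rewrite rep_spec Hrun.
- move=> u Hu; rewrite /space; apply/bigmax_leqP => i _.
  have Hi : i <= size u by rewrite -ltnS ltn_ord.
  have Him : psi_image L n (proj1_sig (run (salg hf) (take i u))).
    by rewrite Hrun; exists (wnd (take i u)); split=> //; apply: Hu.
  rewrite /= /senc /snum.
  case: excluded_middle_informative => H; last by [].
  case: (constructive_indefinite_description _ _) => j _ /=.
  rewrite bin_size /log2; apply: leq_trunc_log; exact: ltn_ord.
Qed.

Lemma lower (S : finType) (L : language S) (hne : exists w, L w)
  (hproper : exists w, ~ L w) n N (f : 'I_N -> seq (seq S -> Prop)) (fi : injective f)
  (hf : forall x, psi_image L n x <-> exists i, f i = x) :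
  forall (A : stream_alg S) m', sw_alg_for L A -> v_le A n m' -> log2 N <= m'.
Proof.
move=> A m' HA Hv.
have Hw : forall i, {w | size w <= n /\ psi L w = f i}.
  move=> i; apply: constructive_indefinite_description; apply/hf; by exists i.
pose g := fun i => st_enc (run A (map Some (proj1_sig (Hw i)))).
apply: log_le; apply: (@count_lb N g).
- move=> i j /(@st_enc_inj S A) E.
  have := key_psi hne hproper (key HA E).
  rewrite (proj2 (proj2_sig (Hw i))) (proj2 (proj2_sig (Hw j))).
  by move/fi.
- move=> i; rewrite /g; case: (Hw i) => w [Hn _] /=.
  have Hwnd : forall x : seq S, wnd (map Some x) = x.
    by move=> x; rewrite /wnd foldl_wnd_some.
  have Hsp : space A (map Some w) <= m'.
    apply: Hv => k _; rewrite -map_take Hwnd.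
    apply: leq_trans Hn; rewrite -{2}(cat_take_drop k w) size_cat; exact: leq_addr.
  apply: leq_trans Hsp; rewrite /space.
  have := @leq_bigmax _ (fun j : 'I_(size (map Some w)).+1 =>
                        size (st_enc (run A (take j (map Some w))))) ord_max.
  by rewrite /= take_size.
Qed.

Theorem theorem4p1 (Sigma : finType) (L : seq Sigma -> Prop)
  (hne : exists w, L w) (hproper : exists w, ~ L w) :
  forall n : nat, exists N : nat,
    has_card (psi_image L n) N /\ V_eq L n (log2 N).
Proof.
move=> n.
have [N [f [fi Hf]]] := has_card_list [::] (psi L) (words Sigma n).
have hf : forall x, psi_image L n x <-> exists i, f i = x.
  move=> x; rewrite -Hf; split.
  - by case=> w [Hw <-]; exists w; rewrite wordsP.
  - by case=> w [Hw <-]; exists w; rewrite -wordsP.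
exists N; split; first by exists f.
split.
- exists (salg hf); exact: upper.
- exact: (@lower Sigma L hne hproper n N f fi hf).
Qed.
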